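(* Let $\ell\ge1$, let $G$ be an $\ell$-connected chordal graph, and let $T$ be a clique of $G$ with $T\ne V(G)$. If $(G,T)$ can be obtained from $(G-v,T\setminus\{v\})$ using an introduce operation, then $|T|\ge \ell+1$ and $G-v$ is $\ell$-connected. If $(G,T)$ can be obtained from $(G_1,T)$ and $(G_2,T)$ using a join operation, then $|T|\ge\ell$ and both $G_1$ and $G_2$ are $\ell$-connected.
   Context: A chordal graph has no induced cycle of length $>3$. For $\ell\ge1$, a connected graph $G$ is $\ell$-connected if $|V(G)|\ge\ell+1$ and every vertex cut (set whose removal disconnects $G$) has at least $\ell$ vertices. A terminal graph $(G,T)$ is a graph with $T\subseteq V(G)$. $(G,T)$ is obtained from $(G-v,T\setminus\{v\})$ by introducing $v$ if $T\ne V(G)$, $v\in T$ and $N(v)\subseteq T$. $(G,T)$ is the join of $(G_1,T)$ and $(G_2,T)$ if $G_1,G_2$ are induced subgraphs of $G$, $V(G_1)\cap V(G_2)=T$, $V(G_1)\cup V(G_2)=V(G)$, $V(G_1)\ne T\ne V(G_2)$, and every edge of $G$ lies in $G_1$ or in $G_2$. *)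

(* Defs.v *)
From mathcomp Require Import all_boot.
Set Implicit Arguments. Unset Strict Implicit. Unset Printing Implicit Defensive.

(* A simple graph is given by a finite ambient type A, a symmetric irreflexive
   adjacency relation e : rel A, and a vertex set V : {set A}; the graph is the
   induced graph (V, e restricted to V).  Induced subgraphs are given by
   vertex subsets. *)

Definition simple_rel (A : finType) (e : rel A) : Prop :=
  symmetric e /\ irreflexive e.

Definition restr (A : finType) (e : rel A) (S : {set A}) : rel A :=
  [rel x y | [&& x \in S, y \in S & e x y]].

(* the graph (S, e) is connected (the empty graph counts as connected here;
   nonemptiness is required separately where needed) *)
Definition connectedG (A : finType) (e : rel A) (S : {set A}) : Prop :=
  forall x y, x \in S -> y \in S -> connect (restr e S) x y.

Definition l_connected (A : finType) (e : rel A) (l : nat) (V : {set A}) : Prop :=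
  [/\ connectedG e V, l.+1 <= #|V| &
      forall X : {set A}, X \subset V -> ~ connectedG e (V :\: X) -> l <= #|X| ].

Definition induced_long_cycle (A : finType) (e : rel A) (V : {set A}) (s : seq A) : Prop :=
  [/\ uniq s, 4 <= size s, all (mem V) s &
      forall (x0 : A) i j, i < size s -> j < size s ->
        e (nth x0 s i) (nth x0 s j) =
        ((i.+1 %% size s == j) || (j.+1 %% size s == i))].

Definition chordal (A : finType) (e : rel A) (V : {set A}) : Prop :=
  forall s : seq A, ~ induced_long_cycle e V s.

Definition is_clique (A : finType) (e : rel A) (V T : {set A}) : Prop :=
  T \subset V /\ forall x y, x \in T -> y \in T -> x != y -> e x y.

Definition nbhd (A : finType) (e : rel A) (V : {set A}) (v : A) : {set A} :=
  [set u in V | e v u].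

(* (V, T) is obtained from (V :\ v, T :\ v) by introducing v *)
Definition introduces (A : finType) (e : rel A) (V T : {set A}) (v : A) : Prop :=
  [/\ T != V, v \in T & nbhd e V v \subset T].

(* (V, T) is the join of (V1, T) and (V2, T) (G1 = G[V1], G2 = G[V2]) *)
Definition is_join (A : finType) (e : rel A) (V T V1 V2 : {set A}) : Prop :=
  [/\ V1 \subset V, V2 \subset V, V1 :&: V2 = T, V1 :|: V2 = V &
      [/\ V1 != T, V2 != T &
      forall x y, x \in V -> y \in V -> e x y ->
        (x \in V1) && (y \in V1) || (x \in V2) && (y \in V2)]].

(* Main.v *)
Require Import Defs.
From mathcomp Require Import all_boot.
Set Implicit Arguments. Unset Strict Implicit. Unset Printing Implicit Defensive.

Section Aux.
Variables (A : finType) (e : rel A) (S W K : {set A}).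
Hypotheses (sym : symmetric e) (WS : W \subset S) (KW : K \subset W)
  (Kcl : forall a b, a \in K -> b \in K -> a != b -> e a b)
  (Hb : forall x y, x \in W -> y \in S -> y \notin W -> e x y -> x \in K).

Lemma aux_path p : forall x x0, path (restr e S) x p -> last x p \in W ->
  x0 \in W -> ((x \in W) && (x0 == x)) || ((x \notin W) && (x0 \in K)) ->
  connect (restr e W) x0 (last x p).
Proof.
elim: p => [|y p IH] x x0 /=.
  move=> _ xW x0W; rewrite xW /= orbF => /eqP ->; exact: connect0.
move=> /andP[/and3P[xS yS exy] Hp] Hl x0W Hinv.
have KxW := subsetP KW; have WSs := subsetP WS.
case xW: (x \in W); case yW: (y \in W); rewrite ?xW /= ?orbF in Hinv.
- move/eqP: Hinv => ->.
  apply: connect_trans (IH y y Hp Hl yW _); last by rewrite yW eqxx.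
  by apply: connect1; apply/and3P; split.
- move/eqP: Hinv => ->.
  apply: IH => //; rewrite yW /=.
  by apply: (Hb xW yS); rewrite ?yW.
- have yK : y \in K.
    by apply: (Hb yW xS); rewrite ?xW // sym.
  apply: connect_trans (IH y y Hp Hl yW _); last by rewrite yW eqxx.
  case: (eqVneq x0 y) => [->|ne]; first exact: connect0.
  by apply: connect1; apply/and3P; split => //; apply: Kcl.
- by apply: IH => //; rewrite yW.
Qed.

Lemma shortcut : connectedG e S -> connectedG e W.
Proof.
move=> cS x y xW yW.
have /connectP[p Hp Hy] := cS x y (subsetP WS _ xW) (subsetP WS _ yW).
rewrite Hy; apply: aux_path => //; first by rewrite -Hy.
by rewrite xW eqxx.
Qed.

End Aux.

Lemma cut_nconn (A : finType) (e : rel A) (S : {set A}) (P : {set A}) a b :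
  (forall x y, restr e S x y -> (x \in P) = (y \in P)) ->
  a \in S -> b \in S -> a \in P -> b \notin P -> ~ connectedG e S.
Proof.
move=> cl aS bS aP bP cS.
have := closed_connect (e := restr e S) (a := P) cl (cS a b aS bS).
by rewrite aP (negbTE bP).
Qed.

Theorem proposition6 (A : finType) (e : rel A) (V T : {set A}) (l : nat) :
  simple_rel e -> 1 <= l -> l_connected e l V -> chordal e V ->
  is_clique e V T -> T != V ->
  (forall v : A, introduces e V T v ->
     l.+1 <= #|T| /\ l_connected e l (V :\ v)) /\
  (forall V1 V2 : {set A}, is_join e V T V1 V2 ->
     [/\ l <= #|T|, l_connected e l V1 & l_connected e l V2]).
Proof.
move=> [sym irr] l1 [cV szV cutV] _ [TV Tcl] TneV.
have TpV : T \proper V by rewrite properEneq TneV TV.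
have [_ [w wV wT]] := properP TpV.
split.
- move=> v [_ vT Nsub].
  set N := nbhd e V v.
  have vV : v \in V := subsetP TV v vT.
  have vN : v \notin N by rewrite inE irr andbF.
  have NT : N \proper T.
    rewrite properEneq Nsub andbT; apply/eqP => NeT; by move: vN; rewrite NeT vT.
  have wN : w \notin N by apply: contra wT; apply: (subsetP Nsub).
  have lN : l <= #|N|.
    apply: cutV; first by apply/subsetP => u; rewrite inE => /andP[].
    apply: (cut_nconn (P := [set v]) (a := v) (b := w)).
    + move=> x y /and3P[xS yS exy]; rewrite !inE.
      case: (eqVneq x v) => [exv|nxv].
        subst x; move: yS; rewrite !inE => /andP[/negP yN yV].
        by exfalso; apply: yN; rewrite yV exy.
      case: (eqVneq y v) => [eyv|//].
      subst y; move: xS; rewrite !inE => /andP[/negP xN xV].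
      by exfalso; apply: xN; rewrite xV sym.
    + by rewrite !inE vV andbT irr.
    + by rewrite in_setD wN wV.
    + by rewrite inE.
    + rewrite inE; apply/eqP => ewv; by move: wT; rewrite ewv vT.
  have lT : l.+1 <= #|T| by exact: leq_ltn_trans lN (proper_card NT).
  split => //.
  have key : forall X : {set A}, X \subset V :\ v -> connectedG e (V :\: X) ->
      connectedG e ((V :\ v) :\: X).
    move=> X XV cX; apply: (@shortcut _ e (V :\: X) _ ((T :\ v) :\: X)) => //.
    + by apply/subsetP => x; rewrite !inE => /and3P[-> _ ->].
    + by apply/subsetP => x; rewrite !inE => /and3P[-> -> /(subsetP TV) ->].
    + move=> a b; rewrite !inE => /and3P[_ _ aT] /and3P[_ _ bT]; exact: Tcl.
    + move=> x y; rewrite !inE => /and3P[xX xv xV] /andP[yX yV].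
      rewrite yX yV /= andbT negbK => /eqP -> exv.
      rewrite xX xv /=; apply: (subsetP Nsub); by rewrite inE xV sym.
  split.
  + by have := key set0 (sub0set _); rewrite !setD0; apply.
  + have := cardsD1 v V; rewrite vV add1n => eV.
    have := proper_card TpV; rewrite eV ltnS => h; exact: leq_trans lT h.
  + move=> X XV nc; apply: cutV.
      by apply: subset_trans XV (subsetDl _ _).
    by move=> cX; apply: nc; apply: key.
- have part : forall V1 V2 : {set A}, V1 \subset V -> V1 :&: V2 = T -> V1 != T ->
      (forall x y, x \in V -> y \in V -> e x y ->
        (x \in V1) && (y \in V1) || (x \in V2) && (y \in V2)) ->
      l <= #|T| -> l_connected e l V1.
    move=> V1 V2 V1V IT n1 Hed lT.
    have TV1 : T \subset V1 by rewrite -IT subsetIl.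
    have TpV1 : T \proper V1 by rewrite properEneq eq_sym n1 TV1.
    have key : forall X : {set A}, X \subset V1 -> connectedG e (V :\: X) ->
        connectedG e (V1 :\: X).
      move=> X XV cX; apply: (@shortcut _ e (V :\: X) _ (T :\: X)) => //.
      * by apply/subsetP => x; rewrite !inE => /andP[-> /(subsetP V1V) ->].
      * by apply/subsetP => x; rewrite !inE => /andP[-> /(subsetP TV1) ->].
      * move=> a b; rewrite !inE => /andP[_ aT] /andP[_ bT]; exact: Tcl.
      * move=> x y; rewrite !inE => /andP[xX xV1] /andP[yX yV].
        rewrite yX /= => yV1 exy.
        have := Hed x y (subsetP V1V _ xV1) yV exy.
        rewrite (negbTE yV1) andbF /= => /andP[xV2 _].
        by rewrite xX -IT inE xV1 xV2.
    split.
    + by have := key set0 (sub0set _); rewrite !setD0; apply.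
    + exact: leq_ltn_trans lT (proper_card TpV1).
    + move=> X XV nc; apply: cutV.
        by apply: subset_trans XV V1V.
      by move=> cX; apply: nc; apply: key.
  move=> V1 V2 [V1V V2V IT UV [n1 n2 Hed]].
  have TV1 : T \subset V1 by rewrite -IT subsetIl.
  have TV2 : T \subset V2 by rewrite -IT subsetIr.
  have TpV1 : T \proper V1 by rewrite properEneq eq_sym n1 TV1.
  have TpV2 : T \proper V2 by rewrite properEneq eq_sym n2 TV2.
  have [_ [a aV1 aT]] := properP TpV1.
  have [_ [b bV2 bT]] := properP TpV2.
  have out1 : forall z, z \in V2 -> z \notin T -> z \notin V1.
    by move=> z zV2; apply: contra => zV1; rewrite -IT inE zV1 zV2.
  have lT : l <= #|T|.
    apply: cutV => // cT.
    apply: (cut_nconn (P := V1 :\: T) (a := a) (b := b)) cT.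
    + move=> x y /and3P[]; rewrite !in_setD => /andP[xT xV] /andP[yT yV] exy.
      rewrite xT yT /=.
      case/orP: (Hed x y xV yV exy) => /andP[h1 h2].
        by rewrite h1 h2.
      by rewrite (negbTE (out1 x h1 xT)) (negbTE (out1 y h2 yT)).
    + by rewrite in_setD aT (subsetP V1V).
    + by rewrite in_setD bT (subsetP V2V).
    + by rewrite in_setD aT.
    + by rewrite in_setD negb_and (out1 b bV2 bT) orbT.
  split => //.
  - exact: (part V1 V2).
  - apply: (part V2 V1) => //; first by rewrite setIC.
    by move=> x y xV yV exy; rewrite orbC; apply: Hed.
Qed.
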